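(* Let $I$ be a countable index set with a nested sequence of finite subsets $I_1\subset I_2\subset\cdots$ with $\bigcup_n I_n=I$. Let $\mathcal{F}=\{f_i\}_{i\in I}\in\mathcal{F}[I]$ and let $\pi:I\to I$ be a bijection (not necessarily finite) such that $\lim_{n\to\infty}\frac{|I_n\cap\pi(I_n)|}{|I_n|}=1$. If $\mathcal{G}=\{g_i=f_{\pi(i)}:i\in I\}$, then $\mathcal{G}\approx\mathcal{F}$.
   Context: $\mathcal{F}[I]$ denotes the set of all families $\{f_i\}_{i\in I}$ in a separable Hilbert space which are frames for their closed linear span. The canonical dual is $\tilde f_i=S^{-1}f_i$ where $S$ is the frame operator on the closed span. $b_n(\mathcal{F})=\sum_{i\in I_n}\langle f_i,\tilde f_i\rangle$ and $b(\mathcal{F})=(b_n(\mathcal{F}))_n$. For sequences $\mathbf{x},\mathbf{y}$, write $\mathbf{x}\approx\mathbf{y}$ if $\lim_{n\to\infty}(x_n-y_n)/|I_n|=0$; for frames, $\mathcal{F}\approx\mathcal{G}$ means $b(\mathcal{F})\approx b(\mathcal{G})$. *)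

(* Defs.v *)
From HB Require Import structures.
From mathcomp Require Import all_boot all_order all_algebra.
From mathcomp Require Import finmap.
From mathcomp Require Import reals.
From mathcomp Require Import complex.
From Stdlib Require Import ClassicalEpsilon.
Set Implicit Arguments. Unset Strict Implicit. Unset Printing Implicit Defensive.
Import Order.TTheory GRing.Theory Num.Theory.
Local Open Scope ring_scope.
Section Defs.
Variable R : realType.
Local Notation C := R[i].

Definition cabs2 (z : C) : R := complex.Re z ^+ 2 + complex.Im z ^+ 2.
Definition cabs (z : C) : R := Num.sqrt (cabs2 z).

(* unconditional (net over finite subsets) summation in a space with norm nrm *)
Definition has_sum (V : zmodType) (nrm : V -> R) (I : eqType)
    (a : I -> V) (l : V) : Prop :=
  forall eps : R, 0 < eps -> exists F0 : seq I, forall F : seq I,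
    uniq F -> {subset F0 <= F} -> nrm (\sum_(i <- F) a i - l) < eps.

Variable H : lmodType C.
Variable ip : H -> H -> C.   (* inner product, linear in the first argument *)

Definition hnorm (x : H) : R := Num.sqrt (complex.Re (ip x x)).

Definition is_inner_product : Prop :=
  (forall (a : C) (x y z : H), ip (a *: x + y) z = a * ip x z + ip y z) /\
  (forall x y : H, ip y x = (ip x y)^*) /\
  (forall x : H, 0 <= ip x x) /\
  (forall x : H, ip x x = 0 -> x = 0).

Definition is_complete : Prop :=
  forall u : nat -> H,
    (forall eps : R, 0 < eps -> exists N, forall m n, (N <= m)%N -> (N <= n)%N ->
        hnorm (u m - u n) < eps) ->
    exists l : H, forall eps : R, 0 < eps -> exists N, forall n, (N <= n)%N ->
        hnorm (u n - l) < eps.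

Definition is_separable : Prop :=
  exists d : nat -> H, forall (x : H) (eps : R), 0 < eps ->
    exists k, hnorm (x - d k) < eps.

Definition is_sep_hilbert : Prop :=
  [/\ is_inner_product, is_complete & is_separable].

Variable I : countType.

Definition clspan (f : I -> H) (x : H) : Prop :=
  forall eps : R, 0 < eps -> exists (s : seq I) (c : I -> C),
    hnorm (x - \sum_(i <- s) c i *: f i) < eps.

Definition frame_for_span (f : I -> H) : Prop :=
  exists A B : R, [/\ 0 < A, 0 < B & forall x, clspan f x ->
    exists s : R, [/\ has_sum Num.norm (fun i => cabs2 (ip x (f i))) s,
                     A * hnorm x ^+ 2 <= s & s <= B * hnorm x ^+ 2]].

(* h = S^{-1} (f i), S the frame operator S x = sum_j <x, f_j> f_j on the
   closed span:  h lies in the closed span and S h = f i *)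
Definition is_canon_dual (f : I -> H) (i : I) (h : H) : Prop :=
  clspan f h /\ has_sum hnorm (fun j => ip h (f j) *: f j) (f i).

Definition canon_dual (f : I -> H) (i : I) : H :=
  epsilon (inhabits 0) (is_canon_dual f i).

Definition bseq (Is : nat -> {fset I}) (f : I -> H) (n : nat) : C :=
  \sum_(i <- Is n) ip (f i) (canon_dual f i).

End Defs.

Local Open Scope fset_scope.

Definition approx (R : realType) (I : countType) (Is : nat -> {fset I})
    (x y : nat -> R[i]) : Prop :=
  forall eps : R, 0 < eps -> exists N, forall n, (N <= n)%N ->
    cabs ((x n - y n) / (#|` Is n|)%:R) < eps.

Definition frame_approx (R : realType) (H : lmodType R[i]) (ip : H -> H -> R[i])
    (I : countType) (Is : nat -> {fset I}) (f g : I -> H) : Prop :=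
  approx Is (bseq ip Is f) (bseq ip Is g).

Definition overlap_to_one (R : realType) (I : countType)
    (Is : nat -> {fset I}) (pi : I -> I) : Prop :=
  forall eps : R, 0 < eps -> exists N, forall n, (N <= n)%N ->
    `| (#|` Is n `&` [fset pi x | x in Is n]|)%:R / (#|` Is n|)%:R - 1 | < eps.

(* Main.v *)
Require Import Defs.
From HB Require Import structures.
From mathcomp Require Import all_boot all_order all_algebra.
From mathcomp Require Import finmap.
From mathcomp Require Import reals.
From mathcomp Require Import complex.
From mathcomp Require Import ring lra.
From Stdlib Require Import ClassicalEpsilon FunctionalExtensionality PropExtensionality.
Set Implicit Arguments. Unset Strict Implicit. Unset Printing Implicit Defensive.
Import Order.TTheory GRing.Theory Num.Theory.
Local Open Scope complex_scope.
Local Open Scope ring_scope.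

Section Aux.
Variable R : realType.
Local Notation C := R[i].

Lemma normcE (z : C) : `|z| = (cabs z)%:C.
Proof. by rewrite normc_def /cabs /cabs2. Qed.

Lemma lecRR (x y : R) : ((x%:C : C) <= y%:C) = (x <= y).
Proof. exact: lecR. Qed.
Lemma ltcRR (x y : R) : ((x%:C : C) < y%:C) = (x < y).
Proof. exact: ltcR. Qed.

Lemma cabs_ge0 (z : C) : 0 <= cabs z.
Proof. by rewrite -lecRR -normcE rmorph0 normr_ge0. Qed.

Lemma cabsD (x y : C) : cabs (x + y) <= cabs x + cabs y.
Proof. by rewrite -lecRR rmorphD /= -!normcE ler_normD. Qed.

Lemma cabsM (x y : C) : cabs (x * y) = cabs x * cabs y.
Proof. by apply: complexI; rewrite rmorphM /= -!normcE normrM. Qed.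

Lemma cabsN (x : C) : cabs (- x) = cabs x.
Proof. by apply: complexI; rewrite -!normcE normrN. Qed.

Lemma cabsV (x : C) : cabs (x^-1) = (cabs x)^-1.
Proof. by apply: complexI; rewrite fmorphV /= -!normcE normfV. Qed.

Lemma cabsR (x : R) : cabs x%:C = `|x|.
Proof. by rewrite /cabs /cabs2 /= expr0n /= addr0 sqrtr_sqr. Qed.

Lemma cabs_eq0 (x : C) : (cabs x = 0) -> x = 0.
Proof. by move=> h; apply/eqP; rewrite -normr_eq0 normcE h. Qed.

Lemma cabs2E (z : C) : (cabs2 z)%:C = z * z^*.
Proof.
rewrite -normCK normcE -rmorphXn /= /cabs sqr_sqrtr //.
by rewrite /cabs2 addr_ge0 // sqr_ge0.
Qed.

Lemma cabs2_cabs (z : C) : cabs2 z = cabs z ^+ 2.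
Proof. by rewrite /cabs sqr_sqrtr // /cabs2 addr_ge0 // sqr_ge0. Qed.

Lemma cabs_small (x : C) : (forall e : R, 0 < e -> cabs x < e) -> x = 0.
Proof.
move=> h; apply: cabs_eq0; apply/eqP; rewrite eq_le cabs_ge0 andbT.
apply/ler_addgt0Pr => e he; rewrite add0r; exact/ltW/h.
Qed.

End Aux.


Section IP.
Variable R : realType.
Local Notation C := R[i].
Variable H : lmodType C.
Variable ip : H -> H -> C.
Hypothesis hip : is_inner_product ip.

Lemma ipDZ a x y z : ip (a *: x + y) z = a * ip x z + ip y z.
Proof. by case: hip => h _; apply: h. Qed.
Lemma ipC x y : ip y x = (ip x y)^*.
Proof. by case: hip => _ [h _]; apply: h. Qed.
Lemma ip_ge0 x : 0 <= ip x x.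
Proof. by case: hip => _ [_ [h _]]; apply: h. Qed.
Lemma ip_eq0 x : ip x x = 0 -> x = 0.
Proof. by case: hip => _ [_ [_ h]]; apply: h. Qed.

Lemma ip0l z : ip 0 z = 0.
Proof.
have := ipDZ 1 0 0 z; rewrite scaler0 addr0 mul1r => h.
by apply: (addrI (ip 0 z)); rewrite addr0 -h.
Qed.
Lemma ipDl x y z : ip (x + y) z = ip x z + ip y z.
Proof. by rewrite -[x]scale1r ipDZ mul1r scale1r. Qed.
Lemma ipZl a x z : ip (a *: x) z = a * ip x z.
Proof. by rewrite -[a *: x]addr0 ipDZ ip0l addr0. Qed.
Lemma ipNl x z : ip (- x) z = - ip x z.
Proof. by rewrite -scaleN1r ipZl mulN1r. Qed.
Lemma ipBl x y z : ip (x - y) z = ip x z - ip y z.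
Proof. by rewrite ipDl ipNl. Qed.
Lemma ip0r z : ip z 0 = 0.
Proof. by rewrite ipC ip0l conjC0. Qed.
Lemma ipDr x y z : ip z (x + y) = ip z x + ip z y.
Proof. by rewrite ipC ipDl rmorphD /= -!ipC. Qed.
Lemma ipZr a x z : ip z (a *: x) = a^* * ip z x.
Proof. by rewrite ipC ipZl rmorphM /= -ipC. Qed.
Lemma ip_sum_l (T : Type) (r : seq T) (P : pred T) (v : T -> H) z :
  ip (\sum_(i <- r | P i) v i) z = \sum_(i <- r | P i) ip (v i) z.
Proof. exact: (big_morph (fun x => ip x z) (fun x y => ipDl x y z) (ip0l z)). Qed.

Lemma ip_real x : ip x x = (complex.Re (ip x x))%:C.
Proof.
have := ip_ge0 x; case: (ip x x) => a b; rewrite lecE /= => /andP[/eqP -> _].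
by [].
Qed.

Lemma hnorm_ge0 x : 0 <= hnorm ip x.
Proof. exact: sqrtr_ge0. Qed.

Lemma Re_ip_ge0 x : 0 <= complex.Re (ip x x).
Proof. by have := ip_ge0 x; rewrite lecE => /andP[]. Qed.

Lemma hnorm_sq x : hnorm ip x ^+ 2 = complex.Re (ip x x).
Proof. by rewrite /hnorm sqr_sqrtr // Re_ip_ge0. Qed.

Lemma hnorm0 : hnorm ip 0 = 0.
Proof. by rewrite /hnorm ip0l /= sqrtr0. Qed.

Lemma CS x y : cabs2 (ip x y) <= complex.Re (ip x x) * complex.Re (ip y y).
Proof.
have [y0|yn0] := eqVneq y 0.
  by rewrite y0 ip0r /cabs2 /= expr0n /= addr0 ip0r /= mulr0.
set p := ip x x; set q := ip y y; set c := ip x y.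
have qr : q = (complex.Re q)%:C by rewrite /q -ip_real.
have qpos : 0 < complex.Re q.
  rewrite lt_def Re_ip_ge0 andbT; apply/eqP => h; move/eqP: yn0; apply.
  by apply: ip_eq0; rewrite -/q qr h.
have qn0 : q != 0.
  rewrite qr; apply/eqP => /(@complexI R) h; move: qpos; by rewrite h ltxx.
set z := - (c / q).
have e : ip (x + z *: y) (x + z *: y) = p - c * c^* / q.
  rewrite ipDl ipZl !ipDr !ipZr -/p -/q -/c (ipC x y) -/c.
  have qc : q^* = q by apply: conj_Creal; apply: ger0_real; exact: ip_ge0.
  rewrite /z rmorphN rmorphM /= fmorphV /= qc.
  field; exact: qn0.
have := ip_ge0 (x + z *: y); rewrite e -cabs2E.
rewrite [p]ip_real qr -fmorphV -rmorphM -rmorphB -[0 : C]/(0%:C) lecRR subr_ge0.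
rewrite ler_pdivrMr // => h; rewrite mulrC; exact: h.
Qed.

Lemma CSabs x y : cabs (ip x y) <= hnorm ip x * hnorm ip y.
Proof.
rewrite -(ler_pXn2r (n := 2)) ?nnegrE ?cabs_ge0 ?mulr_ge0 ?hnorm_ge0 //.
by rewrite -cabs2_cabs exprMn !hnorm_sq CS.
Qed.

End IP.


Section Perm.
Variable R : realType.
Local Notation C := R[i].
Variable H : lmodType C.
Variable ip : H -> H -> C.
Variable I : countType.

Lemma has_sum_comp (V : zmodType) (nrm : V -> R) (a : I -> V) l (g g' : I -> I) :
  cancel g g' -> cancel g' g -> has_sum nrm a l -> has_sum nrm (fun i => a (g i)) l.
Proof.
move=> gK g'K hs eps he; have [F0 hF0] := hs eps he.
exists (map g' F0) => F uF sF.
have := hF0 (map g F); rewrite big_map; apply.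
  by rewrite map_inj_uniq //; exact: can_inj gK.
move=> x xF0; rewrite -[x]g'K; apply: map_f; apply: sF; exact: map_f.
Qed.

Lemma clspan_comp (f : I -> H) (g g' : I -> I) x :
  cancel g' g -> clspan ip f x -> clspan ip (fun i => f (g i)) x.
Proof.
move=> g'K hc eps he; have [s [c hs]] := hc eps he.
exists (map g' s), (fun i => c (g i)).
by rewrite big_map (eq_bigr (fun i => c i *: f i)) // => i _; rewrite g'K.
Qed.

Lemma canon_dual_comp (f : I -> H) (g : I -> I) i :
  bijective g -> canon_dual ip (fun i => f (g i)) i = canon_dual ip f (g i).
Proof.
case=> g' gK g'K; rewrite /canon_dual; congr epsilon.
apply: functional_extensionality => h; apply: propositional_extensionality.
rewrite /is_canon_dual; split=> [][h1 h2]; split.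
- have e : (fun i => f (g (g' i))) = f by apply: functional_extensionality => j; rewrite g'K.
  suff: clspan ip (fun i => f (g (g' i))) h by rewrite e.
  exact: (clspan_comp (f := fun i => f (g i)) gK h1).
- have e : (fun i => ip h (f (g (g' i))) *: f (g (g' i))) = (fun j => ip h (f j) *: f j).
    by apply: functional_extensionality => j; rewrite g'K.
  suff: has_sum (hnorm ip) (fun i => ip h (f (g (g' i))) *: f (g (g' i))) (f (g i)) by rewrite e.
  exact: (has_sum_comp (a := fun j => ip h (f (g j)) *: f (g j)) g'K gK h2).
- exact: clspan_comp g'K h1.
- exact: (has_sum_comp (a := fun j => ip h (f j) *: f j) gK g'K h2).
Qed.

End Perm.


Lemma cabs2_ge0 (R : realType) (z : R[i]) : 0 <= cabs2 z.
Proof. by rewrite /cabs2 addr_ge0 // sqr_ge0. Qed.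

Section Bound.
Variable R : realType.
Local Notation C := R[i].
Variable H : lmodType C.
Variable ip : H -> H -> C.
Variable I : countType.
Variable f : I -> H.
Hypothesis hip : is_inner_product ip.
Hypothesis hfr : frame_for_span ip f.

Lemma term_le (b : I -> R) s j : (forall k, 0 <= b k) -> has_sum Num.norm b s -> b j <= s.
Proof.
move=> b0 hs; rewrite leNgt; apply/negP => hlt.
have he : 0 < b j - s by rewrite subr_gt0.
have [F0 hF0] := hs _ he.
have := hF0 (undup (j :: F0)) (undup_uniq _).
have /[swap]/[apply] : {subset F0 <= undup (j :: F0)}.
  by move=> x hx; rewrite mem_undup in_cons hx orbT.
have hge : b j <= \sum_(i <- undup (j :: F0)) b i.
  rewrite (bigD1_seq j) ?undup_uniq ?mem_undup ?mem_head //=.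
  by rewrite lerDl sumr_ge0.
move=> hn; have := le_lt_trans (ler_norm _) hn; rewrite ltrBlDr subrK.
by rewrite ltNge hge.
Qed.

Lemma f_in_span j : clspan ip f (f j).
Proof.
move=> e he; exists [:: j], (fun _ => 1).
by rewrite big_seq1 scale1r subrr hnorm0.
Qed.

Lemma Im_ip x : complex.Im (ip x x) = 0.
Proof. by rewrite (ip_real hip x). Qed.

Lemma hnorm_f_le : exists B : R, 0 < B /\ forall j, hnorm ip (f j) <= Num.sqrt B.
Proof.
case: hfr => A [B [A0 B0 hx]]; exists B; split => // j.
have [s [hs _ hsB]] := hx _ (f_in_span j).
have := term_le j (fun k => cabs2_ge0 _) hs.
rewrite /cabs2 Im_ip expr0n addr0 /= => h1.
have r0 := Re_ip_ge0 hip (f j).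
have hr : complex.Re (ip (f j) (f j)) <= B.
  move: hsB; rewrite hnorm_sq // => h2; nra.
by rewrite /hnorm ler_wsqrtr.
Qed.

Lemma dual_le1 j h : is_canon_dual ip f j h -> cabs (ip (f j) h) <= 1.
Proof.
case=> hc hs.
case: hfr => A [B [A0 B0 hx]].
have [s [hs2 _ _]] := hx _ hc.
have hjs : ip (f j) h = s%:C.
  apply/eqP; rewrite -subr_eq0; apply/eqP; apply: cabs_small => e he.
  have hN : 0 < hnorm ip h + 1 by rewrite ltr_pwDr ?hnorm_ge0.
  have e1 : 0 < e / 2 / (hnorm ip h + 1) by rewrite !divr_gt0.
  have e2 : 0 < e / 2 by rewrite divr_gt0.
  have [F0 hF0] := hs _ e1.
  have [F1 hF1] := hs2 _ e2.
  set F := undup (F0 ++ F1).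
  have uF : uniq F by exact: undup_uniq.
  have sF0 : {subset F0 <= F} by move=> y hy; rewrite mem_undup mem_cat hy.
  have sF1 : {subset F1 <= F} by move=> y hy; rewrite mem_undup mem_cat hy orbT.
  have h0 := hF0 F uF sF0.
  have h1 := hF1 F uF sF1.
  set S := \sum_(i <- F) _ in h0.
  set sig := \sum_(i <- F) _ in h1.
  have hS : ip S h = sig%:C.
    rewrite /S ip_sum_l // /sig rmorph_sum /=; apply: eq_bigr => k _.
    by rewrite ipZl // cabs2E -ipC.
  have -> : ip (f j) h - s%:C = - ip (S - f j) h + (sig - s)%:C.
    by rewrite ipBl // hS rmorphB /=; ring.
  apply: (le_lt_trans (cabsD _ _)).
  rewrite cabsN cabsR (splitr e); apply: ltrD => //.
  apply: (le_lt_trans (CSabs hip _ _)).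
  have hh := hnorm_ge0 ip h.
  have : hnorm ip (S - f j) * hnorm ip h <= e / 2 / (hnorm ip h + 1) * hnorm ip h.
    by rewrite ler_wpM2r // ltW.
  move/le_lt_trans; apply.
  rewrite mulrAC ltr_pdivrMr // ltr_pM2l //.
  by rewrite ltrDl.
have := term_le j (fun k => cabs2_ge0 (ip h (f k))) hs2.
rewrite (ipC hip) hjs conj_Creal ?realE ?(rmorph0 _) /cabs2 /= ?expr0n ?addr0 => [hs1|].
  rewrite cabsR; have : 0 <= s <= 1 by apply/andP; split; nra.
  by case/andP => s0 s1; rewrite ger0_norm.
by rewrite -[0 : C]/(0%:C) !lecRR le_total.
Qed.

Lemma a_bound : exists M : R, 0 < M /\
  forall j, cabs (ip (f j) (canon_dual ip f j)) <= M.
Proof.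
have [B [B0 hB]] := hnorm_f_le.
set e0 := epsilon (inhabits (0 : H)) (fun _ => False).
exists (1 + Num.sqrt B * hnorm ip e0); split.
  by rewrite ltr_pwDl // mulr_ge0 ?sqrtr_ge0 ?hnorm_ge0.
move=> j.
case: (classic (exists h, is_canon_dual ip f j h)) => [ex|nex].
  have := epsilon_spec (inhabits 0) _ ex => /dual_le1 hle.
  apply: (le_trans hle); rewrite /canon_dual lerDl mulr_ge0 ?sqrtr_ge0 ?hnorm_ge0 //.
have -> : canon_dual ip f j = e0.
  rewrite /canon_dual /e0; congr epsilon.
  apply: functional_extensionality => h; apply: propositional_extensionality.
  by split => // hh; apply: nex; exists h.
apply: (le_trans (CSabs hip _ _)); rewrite ler_wpDl //.
by rewrite ler_wpM2r ?hnorm_ge0.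
Qed.

End Bound.


Section Comb.
Variable R : realType.
Local Notation C := R[i].

Lemma cabs0 : cabs (0 : C) = 0.
Proof. by have := cabsR (0 : R); rewrite normr0. Qed.

Lemma cabs_sum_le (T : Type) (a : T -> C) (M : R) (r : seq T) (P : pred T) :
  (forall j, cabs (a j) <= M) ->
  cabs (\sum_(i <- r | P i) a i) <= M * (count P r)%:R.
Proof.
move=> hM; elim: r => [|x r IH]; first by rewrite big_nil cabs0 mulr0.
rewrite big_cons /=; case: (P x) => /=; last by rewrite add0n.
apply: (le_trans (cabsD _ _)); rewrite natrD mulrDr mulr1.
exact: lerD.
Qed.

Lemma perm_diff_bound (T : eqType) (a : T -> C) (M : R) (s : seq T) (g : T -> T) :
  uniq s -> injective g -> (forall j, cabs (a j) <= M) ->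
  cabs (\sum_(i <- s) a (g i) - \sum_(i <- s) a i)
    <= M * 2 * ((size s)%:R - (count (mem (map g s)) s)%:R).
Proof.
move=> us ig hM.
set t := map g s.
have ut : uniq t by rewrite map_inj_uniq.
rewrite -(big_map g predT a) -/t.
rewrite (bigID (mem s)) [X in _ - X](bigID (mem t)) /=.
have pf : perm_eq [seq i <- t | i \in s] [seq i <- s | i \in t].
  apply: uniq_perm; rewrite ?filter_uniq // => x.
  by rewrite !mem_filter andbC.
rewrite -[\sum_(i <- t | i \in s) a i]big_filter -[\sum_(i <- s | i \in t) a i]big_filter (perm_big _ pf).
have -> : forall x y z : C, (x + y) - (x + z) = y - z by move=> x y z; rewrite [x + y]addrC addrKA.
apply: (le_trans (cabsD _ _)); rewrite cabsN.
have c1 := count_predC (mem s) t.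
have c2 := count_predC (mem t) s.
have c3 : count (mem s) t = count (mem t) s.
  by rewrite -!size_filter (perm_size pf).
rewrite size_map in c1.
apply: le_trans; first apply: lerD; [exact: (cabs_sum_le _ _ hM)|exact: (cabs_sum_le _ _ hM)|].
have e1 : (count (fun i => i \notin s) t)%:R = (size s)%:R - (count (mem t) s)%:R :> R.
  by rewrite -c1 -c3 natrD addrAC subrr add0r.
have e2 : (count (fun i => i \notin t) s)%:R = (size s)%:R - (count (mem t) s)%:R :> R.
  by rewrite -c2 natrD addrAC subrr add0r.
rewrite e1 e2; set D := ((size s)%:R - _ : R).
have -> : M * 2 * D = M * D + M * D by ring.
by [].
Qed.

End Comb.

Local Open Scope fset_scope.

Theorem proposition3p14 (R : realType) (H : lmodType R[i]) (ip : H -> H -> R[i])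
    (I : countType) (Is : nat -> {fset I}) (f : I -> H) (pi : I -> I) :
  is_sep_hilbert ip ->
  (forall n, fsubset (Is n) (Is n.+1)) ->
  (forall i : I, exists n, i \in Is n) ->
  frame_for_span ip f ->
  bijective pi ->
  overlap_to_one R Is pi ->
  frame_approx ip Is (fun i => f (pi i)) f.
Proof.
move=> [hip _ _] _ _ hfr hbij hov.
have [M [M0 hM]] := a_bound hip hfr.
move=> e he.
have M20 : 0 < M * 2 by rewrite mulr_gt0.
have hd : 0 < e / (M * 2) by rewrite divr_gt0.
have [N hN] := hov _ hd.
exists N => n hn; have := hN n hn => {hN}.
rewrite /Defs.bseq.
under eq_bigr do rewrite (canon_dual_comp _ _ _ hbij).
have inj : injective pi by exact: bij_inj.
have hb := perm_diff_bound (a := fun j => ip (f j) (canon_dual ip f j)) (fset_uniq (Is n)) inj hM.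
move: hb => /=.
set s := enum_fset (Is n).
have hK : #|` Is n `&` [fset pi x | x in Is n]| = count (mem (map pi s)) s.
  rewrite -size_filter; apply: perm_size; apply: uniq_perm; rewrite ?filter_uniq ?fset_uniq //.
  move=> x; rewrite mem_filter in_fsetI andbC; congr andb.
  apply/imfsetP/mapP => [][y hy ->]; exists y => //.
rewrite hK => hb hov'.
set K := count _ s in hov' hb.
set d := (_ - _ : R[i]) in hb *.
have [N0|Nn0] := eqVneq (size s) 0%N.
  by rewrite N0 invr0 mulr0 cabs0.
have Npos : 0 < (size s)%:R :> R by rewrite ltr0n lt0n.
have cn : cabs ((size s)%:R : R[i]) = (size s)%:R.
  by rewrite -(rmorph_nat (real_complex R)) cabsR ger0_norm.
rewrite cabsM cabsV cn ltr_pdivrMr //.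
move: hov'; rewrite -normrN => /(le_lt_trans (ler_norm _)) h1.
set x := K%:R / (size s)%:R in h1.
have hx : K%:R = x * (size s)%:R by rewrite /x mulfVK // gt_eqF.
have he' : e = e / (M * 2) * (M * 2) by rewrite mulfVK // gt_eqF.
set dl := e / (M * 2) in h1 he'.
have hp : 0 < (dl - (1 - x)) * (M * 2 * (size s)%:R).
  by rewrite mulr_gt0 ?mulr_gt0 // subr_gt0; lra.
apply: (le_lt_trans hb); rewrite hx he'.
nra.
Qed.
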